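(* Let $T,M,\delta,\tau$ be as in the setup, let $\xi>0$, $\varepsilon\in(0,1)$, $\eta\in(0,1)$. Consider the following randomized procedure (ProbPeel). Set $W_1=V_T$ and $i=1$. While $W_i\neq\emptyset$: random estimates $\hat C_i(w)\ge 0$ for all $w\in W_i$ are produced; set $\hat\tau(W_i)=\frac1k\sum_{w\in W_i}\hat C_i(w)$, $L_i=\{w\in W_i:\hat C_i(w)\le k(1+\xi)\hat\tau(W_i)/|W_i|\}$, $W_{i+1}=W_i\setminus L_i$, and $i\leftarrow i+1$. Finally output a set $W$ among the produced nonempty sets $W_j$ maximizing $\hat\tau(W_j)/|W_j|$. Assume that, for every iteration $i$ and conditionally on everything that happened before iteration $i$, the event $E_i=\{\,|\hat C_i(w)-C_{W_i}(w)|\le\varepsilon\, C_{W_i}(w)\text{ for all }w\in W_i\,\}$ has probability at least $1-\eta/2^{i}$. Then with probability at least $1-\eta$ the output satisfies $$\rho(W)\ \ge\ \frac{(1-\varepsilon)^2}{k(1+\xi)(1+\varepsilon)^2}\,\mathrm{OPT}.$$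
   Context: Setup. A temporal network is a pair $T=(V_T,E_T)$ where $V_T$ is a finite set of $n$ vertices and $E_T$ is a finite set of temporal edges $(u,v,t)$ with $u,v\in V_T$ and timestamp $t\in\mathbb{R}_{>0}$; timestamps are assumed distinct. A $k$-vertex $\ell$-edge temporal motif ($k,\ell\ge 2$) is a pair $M=(K,\sigma)$ where $K=(V_K,E_K)$ is a directed, weakly connected multigraph with $|V_K|=k$, $|E_K|=\ell$, and $\sigma$ is an ordering of $E_K$; equivalently $M$ is the sequence $\langle(x_1,y_1),\dots,(x_\ell,y_\ell)\rangle$ of its edges in the order $\sigma$. Given $\delta>0$, a $\delta$-instance of $M$ in a temporal network is a sequence $S=\langle(x'_1,y'_1,t'_1),\dots,(x'_\ell,y'_\ell,t'_\ell)\rangle$ of $\ell$ distinct temporal edges of that network with $t'_1<\dots<t'_\ell$ such that (1) there is a bijection $h$ from the set of vertices appearing in $S$ onto $V_K$ with $h(x'_i)=x_i$ and $h(y'_i)=y_i$ for all $i\in[\ell]$, and (2) $t'_\ell-t'_1\le\delta$. We write $v\in S$ if $v$ is an endpoint of some edge of $S$; every $\delta$-instance contains exactly $k$ vertices. For $W\subseteq V_T$, $T[W]=(W,\{(u,v,t)\in E_T:u,v\in W\})$ is the induced temporal subnetwork and $\mathcal{S}_W$ is the set of $\delta$-instances of $M$ in $T[W]$. A weighting function $\tau$ assigns a weight $\tau(S)>0$ to each $\delta$-instance $S$ of $M$ in $T$; for $W\subseteq V_T$, $\tau(W)=\sum_{S\in\mathcal{S}_W}\tau(S)$. The temporal motif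 degree of $v$ in $T[W]$ is $C_W(v)=\sum_{S\in\mathcal{S}_W:\,v\in S}\tau(S)$. The density of a nonempty $W\subseteq V_T$ is $\rho(W)=\tau(W)/|W|$, and $\mathrm{OPT}=\max_{\emptyset\ne W\subseteq V_T}\rho(W)$ is the optimal value of the Temporal Motif Densest Subnetwork (TMDS) problem. *)

(* Defs.v *)
From HB Require Import structures.
From mathcomp Require Import all_boot all_order all_algebra.
From mathcomp Require Import all_classical all_reals all_analysis.
Set Implicit Arguments. Unset Strict Implicit. Unset Printing Implicit Defensive.
Import Order.TTheory GRing.Theory Num.Theory.
Local Open Scope ring_scope.

Section TemporalMotifs.
Variables (R : realType) (V : finType).

Definition tedge := (V * V * R)%type.
Definition tsrc (e : tedge) : V := e.1.1.
Definition tdst (e : tedge) : V := e.1.2.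
Definition ttime (e : tedge) : R := e.2.

(* E_T given as a list of temporal edges; timestamps positive and distinct
   (distinct timestamps make the list duplicate-free, i.e. a finite set). *)
Definition temporal_network (E : seq tedge) : bool :=
  all (fun e => 0 < ttime e) E && uniq (map ttime E).

(* A k-vertex l-edge temporal motif: the sequence <(x_1,y_1),...,(x_l,y_l)>
   of edges of a directed multigraph K on vertex set 'I_k, listed in the
   order sigma; K must be weakly connected and have l edges. *)
Definition weakly_connected (k : nat) (M : seq ('I_k * 'I_k)) : bool :=
  [forall x : 'I_k, forall y : 'I_k,
     connect (fun a b => ((a, b) \in M) || ((b, a) \in M)) x y].

Definition is_motif (k l : nat) (M : seq ('I_k * 'I_k)) : bool :=
  [&& (2 <= k)%N, (2 <= l)%N, size M == l & weakly_connected M].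

Definition verts (S : seq tedge) : seq V :=
  flatten [seq [:: tsrc e; tdst e] | e <- S].

Definition is_instance (k : nat) (M : seq ('I_k * 'I_k)) (delta : R)
    (E : seq tedge) (S : seq tedge) : bool :=
  [&& size S == size M,
      all (fun e => e \in E) S,
      uniq S,
      sorted (fun e f => ttime e < ttime f) S,
      [exists h : {ffun V -> 'I_k},
         [&& all (fun p => (h (tsrc p.1) == p.2.1) && (h (tdst p.1) == p.2.2))
                 (zip S M),
             [forall u, forall v,
                 [&& u \in verts S, v \in verts S & h u == h v] ==> (u == v)]
           & [forall x : 'I_k, has (fun v => h v == x) (verts S)]]]
    & (if S is e :: S' then ttime (last e S') - ttime e <= delta else false)].

Definition induced (E : seq tedge) (W : {set V}) : seq tedge :=
  [seq e <- E | (tsrc e \in W) && (tdst e \in W)].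

Definition candidates (k : nat) (M : seq ('I_k * 'I_k)) (E : seq tedge)
  : seq (seq tedge) :=
  undup [seq [seq tnth (in_tuple E) i | i <- tval t]
        | t <- enum {: (size M).-tuple 'I_(size E)}].

Definition instances (k : nat) (M : seq ('I_k * 'I_k)) (delta : R)
    (E : seq tedge) (W : {set V}) : seq (seq tedge) :=
  [seq S <- candidates M E | is_instance M delta (induced E W) S].

Section Weights.
Variables (k : nat) (M : seq ('I_k * 'I_k)) (delta : R) (E : seq tedge)
          (tau : seq tedge -> R).

Definition tauW (W : {set V}) : R := \sum_(S <- instances M delta E W) tau S.
Definition motif_degree (W : {set V}) (v : V) : R :=
  \sum_(S <- instances M delta E W | v \in verts S) tau S.
Definition density (W : {set V}) : R := tauW W / #|W|%:R.
(* OPT = max over nonempty W of rho(W)  (densities are >= 0) *)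
Definition OPT : R := \big[Num.max/0]_(W : {set V} | W != finset.set0) density W.
End Weights.

(* ---- the ProbPeel procedure, for a fixed realisation of the estimates ----
   Iterations are indexed from 0: index i here is iteration i+1 of the paper.
   Ch i : V -> R are the estimates \hat C_{i+1}(w) produced at that iteration
   (only their values on the current set matter). *)
Definition tauhat (k : nat) (C : V -> R) (W : {set V}) : R :=
  k%:R^-1 * \sum_(w in W) C w.

Definition peel_set (k : nat) (xi : R) (C : V -> R) (W : {set V}) : {set V} :=
  [set w in W | C w <= k%:R * (1 + xi) * tauhat k C W / #|W|%:R].

(* Wset Ch i = W_{i+1} of the paper; W_1 = V_T. Once empty, stays empty. *)
Fixpoint Wset (k : nat) (xi : R) (Ch : nat -> V -> R) (i : nat) : {set V} :=
  match i with
  | 0 => [set: V]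
  | j.+1 => Wset k xi Ch j :\: peel_set k xi (Ch j) (Wset k xi Ch j)
  end.

Definition est_density (k : nat) (xi : R) (Ch : nat -> V -> R) (j : nat) : R :=
  tauhat k (Ch j) (Wset k xi Ch j) / #|Wset k xi Ch j|%:R.

Definition is_output (k : nat) (xi : R) (Ch : nat -> V -> R) (j : nat) : Prop :=
  Wset k xi Ch j != finset.set0 /\
  forall j', Wset k xi Ch j' != finset.set0 -> est_density k xi Ch j' <= est_density k xi Ch j.

End TemporalMotifs.

(* Main.v *)
Require Import Defs.
From HB Require Import structures.
From mathcomp Require Import all_boot all_order all_algebra.
From mathcomp Require Import all_classical all_reals all_analysis.
From mathcomp Require Import ring lra zify.
Import Order.TTheory GRing.Theory Num.Theory.
Local Open Scope ring_scope.

Section Comb.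
Variables (R : realType) (V : finType) (E : seq (tedge R V)) (k : nat)
  (M : seq ('I_k * 'I_k)) (delta : R) (tau : seq (tedge R V) -> R).
Hypothesis tau_pos : forall S, is_instance M delta E S -> 0 < tau S.
Hypothesis M_ne : (0 < size M)%N.

Lemma all_induced (W : {set V}) (S : seq (tedge R V)) :
  all (fun e => e \in Defs.induced E W) S =
  all (fun e => e \in E) S && all (fun v => v \in W) (verts S).
Proof.
elim: S => [//|e S IH] /=.
rewrite /verts /= -/(verts S) IH /Defs.induced mem_filter.
by case: (tsrc e \in W); case: (tdst e \in W); case: (e \in E); rewrite /= ?andbF.
Qed.

Definition inW (W : {set V}) S := is_instance M delta E S && all (fun v => v \in W) (verts S).

Lemma inst_induced (W : {set V}) S :
  is_instance M delta (Defs.induced E W) S = inW W S.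
Proof.
rewrite /inW /is_instance all_induced.
by case: (size S == size M); case: (all (fun e => e \in E) S);
   case: (all (fun v => v \in W) (verts S)); rewrite /= ?andbF ?andbT.
Qed.

Lemma tauW_E (W : {set V}) : tauW M delta E tau W = \sum_(S <- candidates M E | inW W S) tau S.
Proof.
by rewrite /tauW /instances big_filter; apply: eq_bigl => S; rewrite inst_induced.
Qed.

Lemma deg_E (W : {set V}) v : motif_degree M delta E tau W v =
  \sum_(S <- candidates M E | inW W S && (v \in verts S)) tau S.
Proof.
rewrite /motif_degree /instances big_filter_cond; apply: eq_bigl => S.
by rewrite inst_induced.
Qed.

Lemma card_verts S : is_instance M delta E S -> #|[set w | w \in verts S]| = k.
Proof.
case/and5P => _ _ _ _ /andP[/existsP[h /and3P[_ /forallP Hinj /forallP Hsur]] _].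
have inj : {in [set w | w \in verts S] &, injective h}.
  move=> u v; rewrite !inE => hu hv huv.
  have := forallP (Hinj u) v; rewrite hu hv huv eqxx /=.
  by move/eqP.
rewrite -(card_in_imset inj).
have -> : h @: [set w | w \in verts S] = [set: 'I_k].
  apply/setP => x; rewrite finset.in_setT.
  have /hasP[v hv /eqP <-] := Hsur x.
  by rewrite imset_f // inE.
by rewrite cardsT card_ord.
Qed.

Lemma tau_ge0 S : is_instance M delta E S -> 0 <= tau S.
Proof. by move/tau_pos/ltW. Qed.

Lemma sum_deg (W : {set V}) : \sum_(w in W) motif_degree M delta E tau W w = k%:R * tauW M delta E tau W.
Proof.
rewrite tauW_E big_distrr /=.
under eq_bigr => w _ do rewrite deg_E big_mkcondr.
rewrite exchange_big /=; apply: eq_bigr => S /andP[hi ha].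
rewrite -big_mkcondr /=.
rewrite (eq_bigl (fun w => w \in [set w | w \in verts S])); last first.
  move=> w; rewrite inE; case hw: (w \in verts S); rewrite ?andbF ?andbT //.
  by move/allP: ha => /(_ _ hw).
by rewrite sumr_const card_verts // mulr_natl.
Qed.

Lemma deg_mono (W1 W2 : {set V}) v : W1 \subset W2 ->
  motif_degree M delta E tau W1 v <= motif_degree M delta E tau W2 v.
Proof.
move=> sub; rewrite !deg_E [X in X <= _]big_mkcond [X in _ <= X]big_mkcond.
apply: ler_sum => S _.
case h1: (inW W1 S && (v \in verts S)).
  move/andP: h1 => [/andP[hi ha] hv].
  have -> : inW W2 S && (v \in verts S).
    rewrite /inW hi hv andbT /=; apply/allP => u hu.
    exact: (fintype.subsetP sub u (allP ha u hu)).
  done.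
case h2: (inW W2 S && _) => //; case/andP: h2 => /andP[hi _] _; exact: tau_ge0.
Qed.

Lemma all_setD1 (W : {set V}) v (s : seq V) :
  all (fun u => u \in W :\ v) s = all (fun u => u \in W) s && (v \notin s).
Proof.
elim: s => [//|u s IH] /=.
rewrite in_setD1 IH in_cons negb_or [v == u]eq_sym.
by case: (u == v); case: (u \in W); case: (all _ s); case: (v \in s).
Qed.

Lemma tauW_split (W : {set V}) v : tauW M delta E tau W =
  tauW M delta E tau (W :\ v) + motif_degree M delta E tau W v.
Proof.
rewrite !tauW_E deg_E (bigID (fun S => v \in verts S)) /= addrC.
congr (_ + _); apply: eq_bigl => S.
by rewrite /inW all_setD1 andbA.
Qed.

Lemma tauW0 : tauW M delta E tau finset.set0 = 0.
Proof.
rewrite tauW_E big1 // => S /andP[hi ha]; exfalso.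
case: S hi ha => [|e S'] hi ha.
  move: hi => /and5P[/eqP hs _ _ _ _].
  by move: M_ne; rewrite -hs.
by move: ha; rewrite /= inE.
Qed.

Lemma tauW_ge0 (W : {set V}) : 0 <= tauW M delta E tau W.
Proof. by rewrite tauW_E; apply: sumr_ge0 => S /andP[hi _]; exact: tau_ge0. Qed.

Lemma density_ge0 (W : {set V}) : 0 <= density M delta E tau W.
Proof. by rewrite /density divr_ge0 // tauW_ge0. Qed.

Lemma tauW_density (W : {set V}) : W != finset.set0 ->
  tauW M delta E tau W = density M delta E tau W * #|W|%:R.
Proof.
move=> hW; rewrite /density divfK // pnatr_eq0 -lt0n card_gt0 //.
Qed.

Lemma tau_le_OPT (W : {set V}) :
  tauW M delta E tau W <= OPT M delta E tau * #|W|%:R.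
Proof.
case: (eqVneq W finset.set0) => [->|hW]; first by rewrite tauW0 cards0 mulr0.
rewrite tauW_density //; apply: ler_wpM2r => //.
exact: (le_bigmax_cond _ (P := fun W : {set V} => W != finset.set0)).
Qed.

Lemma OPT_ge0 : 0 <= OPT M delta E tau.
Proof.
rewrite /OPT; elim/big_ind: _ => //.
  by move=> x y hx hy; rewrite le_max hx.
by move=> W _; exact: density_ge0.
Qed.

Lemma OPT_arg : OPT M delta E tau = 0 \/
  exists2 W : {set V}, W != finset.set0 & OPT M delta E tau = density M delta E tau W.
Proof.
rewrite /OPT; elim/big_ind: _ => //; first by left.
  move=> x y hx hy; rewrite /Num.max; case: ifP => _; by [].
by move=> W hW; right; exists W.
Qed.

Lemma deg_ge_OPT (W : {set V}) v : W != finset.set0 ->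
  OPT M delta E tau = density M delta E tau W -> v \in W ->
  OPT M delta E tau <= motif_degree M delta E tau W v.
Proof.
move=> hW hO hv.
have h1 := tauW_density W hW; rewrite -hO in h1.
have h2 := tau_le_OPT (W :\ v).
have h3 := tauW_split W v.
have h4 := cardsD1 v W; rewrite hv in h4.
rewrite h4 natrD in h1.
set m := (#|W :\ v|%:R : R) in h1 h2.
set O := OPT _ _ _ _ in h1 h2 *.
rewrite /= in h1; lra.
Qed.

Variables (xi : R) (Ch : nat -> V -> R).
Hypothesis k_gt0 : (0 < k)%N.
Hypothesis xi_ge0 : 0 <= xi.
Hypothesis Ch_ge0 : forall i w, w \in Wset k xi Ch i -> 0 <= Ch i w.

Lemma peel_ne (C : V -> R) (W : {set V}) : W != finset.set0 ->
  (forall w, w \in W -> 0 <= C w) -> peel_set k xi C W != finset.set0.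
Proof.
move=> hW hC; apply/negP => /eqP hP.
set s := \sum_(w in W) C w.
set n := (#|W|%:R : R).
have n_gt0 : 0 < n by rewrite ltr0n card_gt0.
have hlt : forall w, w \in W -> k%:R * (1 + xi) * tauhat k C W / n < C w.
  move=> w hw; rewrite ltNge; apply/negP => hle.
  have : w \in peel_set k xi C W by rewrite inE hw hle.
  by rewrite hP inE.
have hs : \sum_(w in W) (k%:R * (1 + xi) * tauhat k C W / n) < s.
  apply: ltr_sum => //.
  case/set0Pn: hW => w hw; apply/hasP; exists w => //; exact: mem_index_enum.
rewrite sumr_const /tauhat -/s in hs.
have mn : forall x : R, x *+ #|W| = x * n by move=> x; rewrite mulr_natr.
rewrite mn in hs.
have kne : (k%:R : R) != 0 by rewrite pnatr_eq0 -lt0n.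
have e : k%:R * (1 + xi) * (k%:R^-1 * s) / n * n = (1 + xi) * s.
  by field; rewrite kne lt0r_neq0.
rewrite e in hs.
have s_ge0 : 0 <= s by apply: sumr_ge0.
have := mulr_ge0 xi_ge0 s_ge0.
lra.
Qed.

Lemma peel_sub (C : V -> R) (W : {set V}) : peel_set k xi C W \subset W.
Proof. by apply/fintype.subsetP => w; rewrite inE => /andP[]. Qed.

Lemma Wset_sub i : Wset k xi Ch i.+1 \subset Wset k xi Ch i.
Proof. exact: subsetDl. Qed.

Lemma Wset_card i : (#|Wset k xi Ch i| <= #|V| - i)%N.
Proof.
elim: i => [|i IH]; first by rewrite subn0 max_card.
case: (eqVneq (Wset k xi Ch i) finset.set0) => h0.
  have := subset_leq_card (Wset_sub i); rewrite h0 cards0 leqn0 => /eqP ->.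
  done.
have hne := peel_ne (Ch i) _ h0 (Ch_ge0 i).
rewrite /= cardsDS; last exact: peel_sub.
  have := hne; rewrite -card_gt0.
  move: IH; set a := #|Wset k xi Ch i|; set b := #|peel_set _ _ _ _|.
  have : (b <= a)%N by apply: subset_leq_card; exact: peel_sub.
  clearbody a b; move: #|V| => N; move=> h1 h2 h3; lia.
Qed.

Lemma Wset_empty j : (#|V| <= j)%N -> Wset k xi Ch j = finset.set0.
Proof.
move=> hj; apply/eqP; rewrite -cards_eq0 -leqn0.
by apply: leq_trans (Wset_card j) _; rewrite leqn0 subn_eq0.
Qed.

Variable eps : R.
Hypothesis eps01 : 0 < eps < 1.

Lemma deg_sandwich (W : {set V}) (C : V -> R) :
  (forall w, w \in W -> `|C w - motif_degree M delta E tau W w| <=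
                         eps * motif_degree M delta E tau W w) ->
  tauhat k C W <= (1 + eps) * tauW M delta E tau W.
Proof.
move=> hC.
have hs : \sum_(w in W) C w <= \sum_(w in W) (1 + eps) * motif_degree M delta E tau W w.
  apply: ler_sum => w hw; move/(_ w hw): hC; rewrite ler_distl => /andP[_ h].
  by rewrite mulrDl mul1r.
rewrite -mulr_sumr sum_deg in hs.
have Kp : (0 : R) < k%:R by rewrite ltr0n.
rewrite /tauhat mulrC ler_pdivrMr //.
by apply: (le_trans hs); rewrite -mulrA [tauW _ _ _ _ _ * _]mulrC.
Qed.

Lemma det_main j :
  (forall i, Wset k xi Ch i != finset.set0 -> forall w, w \in Wset k xi Ch i ->
     `|Ch i w - motif_degree M delta E tau (Wset k xi Ch i) w| <=
       eps * motif_degree M delta E tau (Wset k xi Ch i) w) ->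
  is_output k xi Ch j ->
  (1 - eps) ^+ 2 / (k%:R * (1 + xi) * (1 + eps) ^+ 2) * OPT M delta E tau
    <= density M delta E tau (Wset k xi Ch j).
Proof.
move=> HE [hj hmax].
have Kp : (0 : R) < k%:R by rewrite ltr0n.
have [e0 e1] := andP eps01.
have Ap : 0 < k%:R * (1 + xi).
  apply: mulr_gt0 => //; have hxi := xi_ge0; lra.
have rj0 := density_ge0 (Wset k xi Ch j).
case: OPT_arg => [-> | [Ws hWs hO]]; first by rewrite mulr0.
set O := OPT M delta E tau in hO *.
have O0 : 0 <= O by exact: OPT_ge0.
have ex : exists n, ~~ (Ws \subset Wset k xi Ch n).
  exists #|V|; rewrite Wset_empty // finset.subset0; exact: hWs.
case: (ex_minnP ex) => n hn hmin.
case: n hn hmin => [|i] hn hmin.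
  by move: hn; rewrite /= finset.subsetT.
have hsi : Ws \subset Wset k xi Ch i.
  by apply/negPn/negP => h; have := hmin i h; rewrite ltnn.
case/subsetPn: hn => v hvWs hvn.
have hvi : v \in Wset k xi Ch i := fintype.subsetP hsi v hvWs.
have hvp : v \in peel_set k xi (Ch i) (Wset k xi Ch i).
  by move: hvn; rewrite /= finset.in_setD hvi andbT negbK.
rewrite inE hvi /= in hvp.
have hWi : Wset k xi Ch i != finset.set0 by apply/set0Pn; exists v.
have HEi := HE i hWi.
have HEj := HE j hj.
have d1 : O <= motif_degree M delta E tau (Wset k xi Ch i) v.
  apply: le_trans (deg_ge_OPT Ws v hWs hO hvWs) _; exact: deg_mono.
have d2 : (1 - eps) * motif_degree M delta E tau (Wset k xi Ch i) v <= Ch i v.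
  move/(_ v hvi): HEi; rewrite ler_distl => /andP[h _].
  by rewrite mulrBl mul1r.
have h1 : (1 - eps) * O <= Ch i v.
  apply: le_trans d2; apply: ler_wpM2l => //; lra.
have h3 := hmax i hWi.
rewrite /est_density in h3.
have h4 : tauhat k (Ch j) (Wset k xi Ch j) / #|Wset k xi Ch j|%:R
          <= (1 + eps) * density M delta E tau (Wset k xi Ch j).
  rewrite /density mulrA; apply: ler_wpM2r => //.
  exact: deg_sandwich.
have h2 : Ch i v <= k%:R * (1 + xi) *
   (tauhat k (Ch i) (Wset k xi Ch i) / #|Wset k xi Ch i|%:R).
  by rewrite mulrA.
set ei := tauhat k (Ch i) _ / _ in h2 h3.
set ej := tauhat k (Ch j) _ / _ in h3 h4.
set rj := density _ _ _ _ _ in h4 rj0 *.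
set A := k%:R * (1 + xi) in Ap h2 *.
have h5 : (1 - eps) * O <= A * ((1 + eps) * rj).
  apply: le_trans h1 _; apply: le_trans h2 _; apply: ler_wpM2l; first exact: ltW.
  exact: le_trans h3 h4.
have key : (1 - eps) ^+ 2 * O <= A * (1 + eps) ^+ 2 * rj.
  have hz : 0 <= A * ((1 + eps) * rj) by apply: mulr_ge0; [exact: ltW|apply: mulr_ge0 => //; lra].
  have -> : (1 - eps) ^+ 2 * O = (1 - eps) * ((1 - eps) * O) by rewrite expr2 mulrA.
  have -> : A * (1 + eps) ^+ 2 * rj = (1 + eps) * (A * ((1 + eps) * rj)) by rewrite expr2; ring.
  set Z := A * ((1 + eps) * rj) in h5 hz *.
  have : (1 - eps) * ((1 - eps) * O) <= (1 - eps) * Z by apply: ler_wpM2l => //; lra.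
  nra.
rewrite mulrAC ler_pdivrMr; last by apply: mulr_gt0 => //; apply: exprn_gt0; lra.
by rewrite [rj * _]mulrC.
Qed.

End Comb.

Local Open Scope classical_set_scope.

Section MB.
Variables (d : measure_display) (Omega : measurableType d) (R : realType).

Definition mb (b : Omega -> bool) := measurable [set om | b om].
Definition mf (f : Omega -> R) := measurable_fun [set: Omega] f.

Lemma mb_ext b1 b2 : (forall om, b1 om = b2 om) -> mb b1 -> mb b2.
Proof. by move=> h; rewrite /mb (_ : [set om | b2 om] = [set om | b1 om]) // (funext h). Qed.

Lemma mb_cst c : mb (fun _ => c).
Proof.
rewrite /mb; case: c.
  by rewrite (_ : [set _ | _] = setT) //; apply/seteqP; split.
by rewrite (_ : [set _ | _] = set0) //; apply/seteqP; split.
Qed.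

Lemma mb_and b1 b2 : mb b1 -> mb b2 -> mb (fun om => b1 om && b2 om).
Proof.
move=> h1 h2; rewrite /mb (_ : [set _ | _] = [set om | b1 om] `&` [set om | b2 om]).
  exact: measurableI.
by apply/seteqP; split => x /=; [move/andP|move=> [-> ->]].
Qed.

Lemma mb_neg b : mb b -> mb (fun om => ~~ b om).
Proof.
move=> h; rewrite /mb (_ : [set _ | _] = ~` [set om | b om]).
  exact: measurableC.
by apply/seteqP; split => x /=; [move/negP|move/negP].
Qed.

Lemma mb_or b1 b2 : mb b1 -> mb b2 -> mb (fun om => b1 om || b2 om).
Proof.
move=> h1 h2; apply: (mb_ext (fun om => ~~ (~~ b1 om && ~~ b2 om))).
  by move=> om; rewrite negb_and !negbK.
by apply: mb_neg; apply: mb_and; apply: mb_neg.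
Qed.

Lemma mb_imp b1 b2 : mb b1 -> mb b2 -> mb (fun om => b1 om ==> b2 om).
Proof.
move=> h1 h2; apply: (mb_ext (fun om => ~~ b1 om || b2 om)).
  by move=> om; rewrite implybE.
by apply: mb_or => //; apply: mb_neg.
Qed.

Lemma mb_eqb b1 b2 : mb b1 -> mb b2 -> mb (fun om => b1 om == b2 om).
Proof.
move=> h1 h2; apply: (mb_ext (fun om => (b1 om && b2 om) || (~~ b1 om && ~~ b2 om))).
  by move=> om; case: (b1 om); case: (b2 om).
by apply: mb_or; apply: mb_and => //; apply: mb_neg.
Qed.

Lemma mb_le f g : mf f -> mf g -> mb (fun om => f om <= g om).
Proof.
move=> hf hg; have := measurable_fun_le measurableT hf hg.
by rewrite setTI.
Qed.

Lemma mb_all (X : eqType) (b : X -> Omega -> bool) (s : seq X) :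
  (forall x, mb (b x)) -> mb (fun om => all (fun x => b x om) s).
Proof.
move=> hb; elim: s => [|x s IH] /=; first exact: mb_cst.
exact: mb_and.
Qed.

Lemma mb_forall (X : finType) (b : X -> Omega -> bool) :
  (forall x, mb (b x)) -> mb (fun om => [forall x, b x om]).
Proof.
move=> hb; apply: (mb_ext (fun om => all (fun x => b x om) (enum X))).
  move=> om; apply/allP/forallP => h x; first by apply: h; rewrite mem_enum.
  by move=> _; apply: h.
exact: mb_all.
Qed.

Lemma mb_exists (X : finType) (b : X -> Omega -> bool) :
  (forall x, mb (b x)) -> mb (fun om => [exists x, b x om]).
Proof.
move=> hb; apply: (mb_ext (fun om => ~~ [forall x, ~~ b x om])).
  by move=> om; rewrite negb_forall; apply/existsP/existsP => -[x hx]; exists x; rewrite ?negbK in hx *.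
by apply: mb_neg; apply: mb_forall => x; apply: mb_neg.
Qed.

Lemma mb_dep (X : finType) (g : Omega -> X) (Q : X -> Omega -> bool) :
  (forall x, mb (fun om => g om == x)) -> (forall x, mb (Q x)) ->
  mb (fun om => Q (g om) om).
Proof.
move=> hg hQ; apply: (mb_ext (fun om => [exists x, (g om == x) && Q x om])).
  move=> om; apply/existsP/idP => [[x /andP[/eqP -> //]]|h].
  by exists (g om); rewrite eqxx.
by apply: mb_exists => x; apply: mb_and.
Qed.

Lemma mb_dep' (X : finType) (g : Omega -> X) (Q : X -> Omega -> bool) (b : Omega -> bool) :
  (forall om, b om = Q (g om) om) ->
  (forall x, mb (fun om => g om == x)) -> (forall x, mb (Q x)) -> mb b.
Proof.
move=> hb hg hQ; apply: (mb_ext (fun om => Q (g om) om)); first by move=> om; rewrite hb.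
exact: mb_dep.
Qed.

Lemma sigmaT (G : set (set Omega)) : <<s G >> setT.
Proof.
have [h0 hD _] := smallest_sigma_algebra setT G.
by have := hD _ h0; rewrite setD0.
Qed.

Lemma mf_cst c : mf (fun _ => c).
Proof. exact: measurable_cst. Qed.

Lemma mf_mul f g : mf f -> mf g -> mf (fun om => f om * g om).
Proof. exact: measurable_realfun.measurable_funM. Qed.

Lemma mf_sumS (V : finType) (S : {set V}) (f : V -> Omega -> R) :
  (forall w, mf (f w)) -> mf (fun om => \sum_(w in S) f w om).
Proof.
move=> hf.
have -> : (fun om => \sum_(w in S) f w om) =
          (fun om => \sum_(w <- index_enum V) (if w \in S then f w om else 0)).
  by apply: funext => om; rewrite big_mkcond.
apply: measurable_sum => w; case: (w \in S); [exact: hf | exact: mf_cst].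
Qed.

End MB.
Arguments mb {d Omega}.
Arguments mb_ext {d Omega}.
Arguments mb_cst {d Omega}.
Arguments mb_dep {d Omega}.
Arguments mb_dep' {d Omega}.
Arguments mb_forall {d Omega}.
Arguments mb_exists {d Omega}.
Arguments mf {d Omega R}.

Section Pr.
Variables (d : measure_display) (Omega : measurableType d) (R : realType)
  (P : probability Omega R).

Definition pr (A : set Omega) : R := fine (P A).

Lemma prE A : measurable A -> P A = (pr A)%:E.
Proof. by move=> mA; rewrite /pr fineK // fin_num_measure. Qed.

Lemma pr_le1 A : measurable A -> pr A <= 1.
Proof. by move=> mA; have := probability_le1 P mA; rewrite prE // lee_fin. Qed.


Lemma probI_ge A B : measurable A -> measurable B -> pr A + pr B - 1 <= pr (A `&` B).
Proof.
move=> mA mB.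
have hU : P (A `|` B) = (P A + P B - P (A `&` B))%E.
  apply: measureUfinl => //; have h := ltry (pr A); rewrite -prE // in h; exact: h.
rewrite !prE // in hU; [|exact: measurableI|exact: measurableU].
have : (pr (A `|` B))%:E = (pr A + pr B - pr (A `&` B))%:E by rewrite hU EFinB EFinD.
move=> -[{}hU].
have := pr_le1 _ (measurableU _ _ mA mB); rewrite hU; lra.
Qed.

Lemma bigI_meas (F : nat -> set Omega) n : (forall i, measurable (F i)) ->
  measurable (\big[setI/setT]_(i < n) F i).
Proof. by move=> hF; apply: bigsetI_measurable => i _; exact: hF. Qed.

Lemma prob_bigI (F : nat -> set Omega) (b : nat -> R) n :
  (forall i, measurable (F i)) -> (forall i, 1 - b i <= pr (F i)) ->
  1 - \sum_(i < n) b i <= pr (\big[setI/setT]_(i < n) F i).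
Proof.
move=> hF hb; elim: n => [|n IH].
  by rewrite !big_ord0 /pr probability_setT /= subr0.
rewrite !big_ord_recr /=.
have := probI_ge _ _ (bigI_meas F n hF) (hF n).
have := hb n; lra.
Qed.

Lemma in_bigI (F : nat -> set Omega) n om :
  (\big[setI/setT]_(i < n) F i) om -> forall i, (i < n)%N -> F i om.
Proof.
elim: n => [|n IH] //.
rewrite big_ord_recr /= => -[h1 h2] i hi.
case: (ltngtP i n) => hin; first exact: IH.
  by move: hi; rewrite ltnS leqNgt hin.
by rewrite hin.
Qed.

End Pr.
Arguments pr {d Omega R}.
Arguments prE {d Omega R}.
Arguments prob_bigI {d Omega R}.
Arguments bigI_meas {d Omega}.

Lemma geom_sum (R : realType) (eta : R) n :
  \sum_(i < n) eta / 2 ^+ i.+1 = eta - eta / 2 ^+ n.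
Proof.
elim: n => [|n IH]; first by rewrite big_ord0 expr0 divr1 subrr.
rewrite big_ord_recr /= IH !exprS.
have h2 : (2 : R) ^+ n != 0 by rewrite expf_neq0.
by field.
Qed.

Theorem theorem4p1
  (R : realType) (V : finType) (E : seq (tedge R V))
  (k : nat) (M : seq ('I_k * 'I_k)) (l : nat) (delta : R)
  (tau : seq (tedge R V) -> R) (xi eps eta : R)
  (d : measure_display) (Omega : measurableType d) (P : probability Omega R)
  (Chat : nat -> Omega -> V -> R) :
  (0 < #|V|)%N ->
  temporal_network E ->
  is_motif l M ->
  0 < delta ->
  (forall S, is_instance M delta E S -> 0 < tau S) ->
  0 < xi -> 0 < eps < 1 -> 0 < eta < 1 ->
  (* the estimates are random variables *)
  (forall i w, measurable_fun setT (fun om => Chat i om w)) ->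
  (* the estimates produced at iteration i are nonnegative on W_i *)
  (forall i om w, w \in Wset k xi (fun j => Chat j om) i -> 0 <= Chat i om w) ->
  (forall i (A : set Omega),
      <<s [set B | exists j w (Y : set R),
                    [/\ (j < i)%N, measurable Y &
                        B = (fun om => Chat j om w) @^-1` Y]] >> A ->
      (P (A `&` [set om | forall w, w \in Wset k xi (fun j => Chat j om) i ->
                (`|Chat i om w - motif_degree M delta E tau
                                  (Wset k xi (fun j => Chat j om) i) w|
                <= eps * motif_degree M delta E tau
                           (Wset k xi (fun j => Chat j om) i) w)%R])
       >= (1 - eta / 2 ^+ i.+1)%R%:E * P A)%E) ->
  (P [set om | forall j, is_output k xi (fun i => Chat i om) j ->
        (density M delta E tau (Wset k xi (fun i => Chat i om) j)
        >= (1 - eps) ^+ 2 / (k%:R * (1 + xi) * (1 + eps) ^+ 2)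
           * OPT M delta E tau)%R] >= (1 - eta)%R%:E)%E.
Proof.
move=> hV hT hM hdelta htau hxi heps heta hmeas hnn hcond.
have /and4P[k2 l2 /eqP hsz _] := hM.
have k_gt0 : (0 < k)%N by apply: leq_trans k2.
have M_ne : (0 < size M)%N by rewrite hsz; apply: leq_trans l2.
have xi0 : 0 <= xi := ltW hxi.
set N := #|V|.
pose Wt i om := Wset k xi (fun j => Chat j om) i.
have Wt_empty : forall om j, (N <= j)%N -> Wt j om = finset.set0.
  move=> om j hj; exact: (@Wset_empty R V k M M_ne xi (fun j => Chat j om) k_gt0 xi0 (fun i w => hnn i om w) j hj).
have WtN : forall om j, Wt j om != finset.set0 -> (j < N)%N.
  move=> om j hj; rewrite ltnNge; apply/negP => c; move: hj; by rewrite Wt_empty // eqxx.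
have mbW : forall i (S : {set V}), mb (fun om => Wt i om == S).
  elim => [|i IH] S.
    apply: (mb_ext (fun _ : Omega => (finset.setT : {set V}) == S)) => //; exact: mb_cst.
  apply: (@mb_dep' d Omega _ (Wt i) (fun T om => T :\: peel_set k xi (Chat i om) T == S)).
  - by move=> om.
  - exact: IH.
  move=> T.
  apply: (mb_ext (fun om => [forall w, (w \in T :\: peel_set k xi (Chat i om) T) == (w \in S)])).
    move=> om; apply/forallP/eqP => [h|->]; last by move=> w.
    by apply/setP => w; apply/eqP; exact: h.
  apply: mb_forall => w; apply: mb_eqb; last exact: mb_cst.
  apply: (mb_ext (fun om => ~~ ((w \in T) && (Chat i om w <= k%:R * (1 + xi) *
       tauhat k (Chat i om) T / #|T|%:R)) && (w \in T))).
    by move=> om; rewrite finset.in_setD inE.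
  apply: mb_and; last exact: mb_cst.
  apply: mb_neg; apply: mb_and; first exact: mb_cst.
  apply: mb_le; first exact: hmeas.
  apply: mf_mul; last exact: mf_cst.
  apply: mf_mul; first exact: mf_cst.
  rewrite /tauhat; apply: mf_mul; first exact: mf_cst.
  apply: mf_sumS => w'; exact: hmeas.
pose eb i om := [forall w, (w \in Wt i om) ==>
   (`|Chat i om w - motif_degree M delta E tau (Wt i om) w| <=
     eps * motif_degree M delta E tau (Wt i om) w)].
have mbE : forall i, mb (eb i).
  move=> i.
  apply: (@mb_dep' d Omega _ (Wt i) (fun T om => [forall w, (w \in T) ==>
   (`|Chat i om w - motif_degree M delta E tau T w| <=
     eps * motif_degree M delta E tau T w)])).
  - by move=> om.
  - exact: mbW.
  move=> T; apply: mb_forall => w; apply: mb_imp; first exact: mb_cst.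
  apply: (mb_ext (fun om => (motif_degree M delta E tau T w - eps * motif_degree M delta E tau T w
     <= Chat i om w) && (Chat i om w <= motif_degree M delta E tau T w + eps * motif_degree M delta E tau T w))).
    by move=> om; rewrite ler_distl.
  by apply: mb_and; apply: mb_le; (exact: mf_cst || exact: hmeas).
pose Eset i := [set om | eb i om].
have measF : forall i, measurable (Eset i) by move=> i; exact: mbE.
have hF : forall i, 1 - eta / 2 ^+ i.+1 <= pr P (Eset i).
  move=> i; have := hcond i setT (sigmaT _ _ _).
  rewrite setTI probability_setT mule1.
  have -> : [set om | forall w, w \in Wset k xi (fun j => Chat j om) i ->
                (`|Chat i om w - motif_degree M delta E tau
                                  (Wset k xi (fun j => Chat j om) i) w|
                <= eps * motif_degree M delta E tau
                           (Wset k xi (fun j => Chat j om) i) w)%R] = Eset i.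
    apply/seteqP; split => om /=.
      by move=> h; apply/forallP => w; apply/implyP; exact: h.
    by move=> /forallP h w hw; exact: (implyP (h w) hw).
  by rewrite prE // lee_fin.
have hI := prob_bigI P Eset (fun i => eta / 2 ^+ i.+1) N measF hF.
rewrite geom_sum in hI.
set I := \big[setI/setT]_(i < N) Eset i in hI.
have mI : measurable I by exact: bigI_meas.
have hI' : ((1 - eta)%:E <= P I)%E.
  rewrite prE // lee_fin; apply: le_trans hI.
  have : 0 <= eta / 2 ^+ N by apply: divr_ge0; [case/andP: heta => h _; exact: ltW|exact: exprn_ge0].
  lra.
set cO := (1 - eps) ^+ 2 / (k%:R * (1 + xi) * (1 + eps) ^+ 2) * OPT M delta E tau.
pose est j om := est_density k xi (fun i => Chat i om) j.
pose gb om := [forall j : 'I_N, ((Wt j om != finset.set0) &&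
   [forall j' : 'I_N, (Wt j' om != finset.set0) ==> (est j' om <= est j om)])
   ==> (cO <= density M delta E tau (Wt j om))].
have hG : [set om | forall j, is_output k xi (fun i => Chat i om) j ->
        (density M delta E tau (Wset k xi (fun i => Chat i om) j) >= cO)%R]
        = [set om | gb om].
  apply/seteqP; split => om /=.
    move=> h; apply/forallP => j; apply/implyP => /andP[hj /forallP hmax].
    apply: h; split => // j' hj'.
    exact: (implyP (hmax (Ordinal (WtN om j' hj'))) hj').
  move=> h j [hj hmax].
  have := implyP (forallP h (Ordinal (WtN om j hj))); apply.
  rewrite hj /=; apply/forallP => j'; apply/implyP; exact: hmax.
have mftau : forall j (T : {set V}), mf (fun om => tauhat k (Chat j om) T / #|T|%:R).
  move=> j T; apply: mf_mul; last exact: mf_cst.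
  rewrite /tauhat; apply: mf_mul; first exact: mf_cst.
  apply: mf_sumS => w'; exact: hmeas.
have mG : measurable [set om | gb om].
  apply: mb_forall => j; apply: mb_imp.
    apply: mb_and; first by apply: mb_neg; exact: mbW.
    apply: mb_forall => j'; apply: mb_imp; first by apply: mb_neg; exact: mbW.
    apply: (@mb_dep' d Omega _ (Wt j') (fun T om =>
       tauhat k (Chat j' om) T / #|T|%:R <= est j om)).
    - by move=> om.
    - exact: mbW.
    move=> T.
    apply: (@mb_dep' d Omega _ (Wt j) (fun T2 om =>
       tauhat k (Chat j' om) T / #|T|%:R <= tauhat k (Chat j om) T2 / #|T2|%:R)).
    - by move=> om.
    - exact: mbW.
    by move=> T2; apply: mb_le; exact: mftau.
  apply: (@mb_dep' d Omega _ (Wt j) (fun T om => cO <= density M delta E tau T)).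
  - by move=> om.
  - exact: mbW.
  by move=> T; exact: mb_cst.
have sub : I `<=` [set om | gb om].
  rewrite -hG => om hIom j hout.
  apply: (@det_main R V E k M delta tau htau M_ne xi (fun i => Chat i om) k_gt0 xi0 (fun i w => hnn i om w) eps heps j _ hout).
  move=> i hi w hw.
  have := in_bigI _ _ _ _ _ hIom i (WtN om i hi).
  by move=> /forallP /(_ w) /implyP /(_ hw).
rewrite hG; apply: (le_trans hI').
exact: (le_measure _ (mem_set mI) (mem_set mG) sub).
Qed.
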